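(* Let $(X,d)$ be a complete metric space endowed with a continuous $k$-mean $\mu$ that is weakly $\beta$-contractive. If $X$ is uniformly locally convex (with respect to $\mu$), then the barycentric operator $\beta$ of $\mu$ is power convergent, so that $\mu$ has a $\beta$-extension.
   Context: A $k$-mean is a map $\mu:X^k\to X$ with $\mu(x,\ldots,x)=x$. Barycentric operator: $\beta:X^{k+1}\to X^{k+1}$, $\beta(\mathbf{x})_j=\mu(x_1,\ldots,x_{j-1},x_{j+1},\ldots,x_{k+1})$. $\Delta(\mathbf{x})=\max_{i,j}d(x_i,x_j)$; $\mu$ is weakly $\beta$-contractive if $\Delta(\beta^n(\mathbf{x}))\to0$ for all $\mathbf{x}\in X^{k+1}$. A subset $C$ is convex if $\mu(x_1,\ldots,x_k)\in C$ whenever $x_1,\ldots,x_k\in C$; the convex hull of $A$ is the smallest convex set containing $A$. $X$ is uniformly locally convex if for each $\varepsilon>0$ there is $\delta>0$ such that the convex hull of any set $A$ of diameter less than $\delta$ has diameter less than $\varepsilon$. $\beta$ is power convergent if for each $\mathbf{x}$, $\beta^n(\mathbf{x})\to(x^*,\ldots,x^* )$ for some $x^*$; a $(k+1)$-mean $\nu$ is a $\beta$-extension of $\mu$ if $\beta^n(\mathbf{x})\to(\nu(\mathbf{x}),\ldots,\nu(\mathbf{x}))$ for all $\mathbf{x}$. *)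

(* Defs.v *)
From Stdlib Require Import Reals.
From mathcomp Require Import ssreflect ssrfun ssrbool eqtype ssrnat seq fintype bigop.
Set Implicit Arguments. Unset Strict Implicit. Unset Printing Implicit Defensive.
Open Scope R_scope.

Section MetricDefs.
Variables (X : Type) (d : X -> X -> R).

Definition is_metric : Prop :=
  (forall x y, 0 <= d x y) /\
  (forall x y, d x y = 0 <-> x = y) /\
  (forall x y, d x y = d y x) /\
  (forall x y z, d x z <= d x y + d y z).

Definition converges (u : nat -> X) (l : X) : Prop :=
  forall eps, 0 < eps -> exists N, forall n, (N <= n)%nat -> d (u n) l < eps.

Definition cauchy (u : nat -> X) : Prop :=
  forall eps, 0 < eps -> exists N, forall m n, (N <= m)%nat -> (N <= n)%nat ->
    d (u m) (u n) < eps.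

Definition complete : Prop :=
  forall u, cauchy u -> exists l, converges u l.

Definition is_mean (k : nat) (mu : ('I_k -> X) -> X) : Prop :=
  forall x : X, mu (fun _ => x) = x.

(* continuity of mu : X^k -> X, X^k with the product topology
   (equivalently, the max metric) *)
Definition continuous_mean (k : nat) (mu : ('I_k -> X) -> X) : Prop :=
  forall (x : 'I_k -> X) eps, 0 < eps -> exists delta, 0 < delta /\
    forall y : 'I_k -> X, (forall i, d (x i) (y i) < delta) -> d (mu x) (mu y) < eps.

(* barycentric operator beta : X^(k+1) -> X^(k+1),
   beta(x)_j = mu(x_1,..,x_(j-1),x_(j+1),..,x_(k+1)); [lift j] enumerates
   the indices different from j in increasing order. *)
Definition beta (k : nat) (mu : ('I_k -> X) -> X) (x : 'I_k.+1 -> X) : 'I_k.+1 -> X :=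
  fun j => mu (fun i => x (lift j i)).

Definition Delta (n : nat) (x : 'I_n -> X) : R :=
  \big[Rmax/0]_(i < n) \big[Rmax/0]_(j < n) d (x i) (x j).

Definition weakly_beta_contractive (k : nat) (mu : ('I_k -> X) -> X) : Prop :=
  forall x : 'I_k.+1 -> X, forall eps, 0 < eps -> exists N, forall n, (N <= n)%nat ->
    Rabs (Delta (iter n (beta mu) x)) < eps.

Definition convex_set (k : nat) (mu : ('I_k -> X) -> X) (C : X -> Prop) : Prop :=
  forall x : 'I_k -> X, (forall i, C (x i)) -> C (mu x).

Definition convex_hull (k : nat) (mu : ('I_k -> X) -> X) (A : X -> Prop) : X -> Prop :=
  fun z => forall C, convex_set mu C -> (forall a, A a -> C a) -> C z.

(* diam A < r, where diam A = sup { d x y | x, y in A } (in [0, +oo]) *)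
Definition diam_lt (A : X -> Prop) (r : R) : Prop :=
  exists s, s < r /\ forall x y, A x -> A y -> d x y <= s.

Definition uniformly_locally_convex (k : nat) (mu : ('I_k -> X) -> X) : Prop :=
  forall eps, 0 < eps -> exists delta, 0 < delta /\
    forall A : X -> Prop, diam_lt A delta -> diam_lt (convex_hull mu A) eps.

Definition power_convergent (k : nat) (mu : ('I_k -> X) -> X) : Prop :=
  forall x : 'I_k.+1 -> X, exists xs : X,
    forall j, converges (fun n => iter n (beta mu) x j) xs.

Definition beta_extension (k : nat) (mu : ('I_k -> X) -> X)
    (nu : ('I_k.+1 -> X) -> X) : Prop :=
  is_mean nu /\
  forall x : 'I_k.+1 -> X, forall j, converges (fun n => iter n (beta mu) x j) (nu x).

End MetricDefs.

(* Main.v *)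
Require Import Defs.
From Stdlib Require Import Reals Lra.
From Stdlib Require Import ClassicalEpsilon FunctionalExtensionality.
From mathcomp Require Import ssreflect ssrfun ssrbool eqtype ssrnat seq fintype bigop.
Open Scope R_scope.

Lemma bigmax_seq_ge (T : eqType) (F : T -> R) (s : seq T) (x : T) :
  x \in s -> F x <= \big[Rmax/0]_(i <- s) F i.
Proof.
elim: s => [|a s IH] //=.
rewrite in_cons big_cons => /orP [/eqP -> | H].
- apply: Rmax_l.
- apply: Rle_trans (IH H) _; apply: Rmax_r.
Qed.

Lemma bigmax_ge n (F : 'I_n -> R) (i : 'I_n) : F i <= \big[Rmax/0]_(j < n) F j.
Proof. by apply: bigmax_seq_ge; rewrite mem_index_enum. Qed.

Lemma Delta_ge (X : Type) (d : X -> X -> R) n (x : 'I_n -> X) i j :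
  d (x i) (x j) <= Defs.Delta d x.
Proof.
rewrite /Defs.Delta.
eapply Rle_trans; last first.
  exact: (bigmax_ge _ (fun i => \big[Rmax/0]_(j < n) d (x i) (x j)) i).
exact: (bigmax_ge _ (fun j => d (x i) (x j)) j).
Qed.

Lemma hull_convex (X : Type) k (mu : ('I_k -> X) -> X) A :
  convex_set mu (convex_hull mu A).
Proof.
move=> y Hy C HC HA; apply: (HC) => i; exact: (Hy i C HC HA).
Qed.

Lemma key (X : Type) (d : X -> X -> R) (k : nat) (mu : ('I_k -> X) -> X) :
  weakly_beta_contractive d mu -> uniformly_locally_convex d mu ->
  forall x eps, 0 < eps -> exists N, forall m n i j, (N <= m)%nat -> (N <= n)%nat ->
    d (iter m (beta mu) x i) (iter n (beta mu) x j) < eps.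
Proof.
move=> Hw Hu x eps Heps.
have [delta [Hdelta Hd]] := Hu eps Heps.
have [N HN] := Hw x delta Hdelta.
set A := fun z => exists j, z = iter N (beta mu) x j.
have HA : diam_lt d A delta.
  exists (Defs.Delta d (iter N (beta mu) x)); split.
  - apply: Rle_lt_trans (Rle_abs _) (HN N (leqnn N)).
  - by move=> y z [i ->] [j ->]; apply: Delta_ge.
have [s [Hs Hs2]] := Hd A HA.
have Hin : forall m j, convex_hull mu A (iter (m + N) (beta mu) x j).
  elim=> [|m IH] j.
  - by move=> C _ HC; apply: HC; exists j.
  - rewrite addSn iterS /beta.
    apply: hull_convex => i; exact: IH.
exists N => m n i j Hm Hn.
apply: (Rle_lt_trans _ _ _ _ Hs).
rewrite -(subnK Hm) -(subnK Hn); apply: Hs2; exact: Hin.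
Qed.

Theorem proposition3p9 (X : Type) (d : X -> X -> R) (k : nat)
  (mu : ('I_k -> X) -> X) :
  is_metric d -> complete d ->
  is_mean mu -> continuous_mean d mu ->
  weakly_beta_contractive d mu ->
  uniformly_locally_convex d mu ->
  power_convergent d mu /\ exists nu, beta_extension d mu nu.
Proof.
move=> [Hpos [Hzero [Hsym Htri]]] Hc Hm _ Hw Hu.
have PC : power_convergent d mu.
  move=> x.
  have Hk := @key _ _ _ _ Hw Hu x.
  have [l Hl] : exists l, converges d (fun n => iter n (beta mu) x ord0) l.
    apply: Hc => eps Heps.
    have [N HN] := Hk eps Heps.
    by exists N => m n Hm1 Hn1; apply: HN.
  exists l => j eps Heps.
  have [N HN] := Hk (eps/2) ltac:(lra).
  have [N' HN'] := Hl (eps/2) ltac:(lra).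
  exists (maxn N N') => n Hn.
  have H1 := HN n n j ord0 (leq_trans (leq_maxl N N') Hn) (leq_trans (leq_maxl N N') Hn).
  have H2 := HN' n (leq_trans (leq_maxr N N') Hn).
  have := Htri (iter n (beta mu) x j) (iter n (beta mu) x ord0) l.
  simpl in H2; lra.
split=> //.
exists (fun x => proj1_sig (constructive_indefinite_description _ (PC x))).
split.
- move=> c.
  case: (constructive_indefinite_description _ _) => l Hl /=.
  have Hit : forall n, iter n (beta mu) (fun _ : 'I_k.+1 => c) = (fun _ => c).
    elim=> [|n IH] //=; rewrite IH; apply: functional_extensionality => j.
    by rewrite /beta Hm.
  have Hl0 := Hl ord0.
  have H0 : d c l = 0.
    have := Hpos c l; case/Rle_lt_or_eq_dec => H; last by [].
    have [N HN] := Hl0 _ H.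
    have := HN N (leqnn N); rewrite Hit; lra.
  by symmetry; apply/Hzero.
- move=> x j.
  case: (constructive_indefinite_description _ _) => l Hl /=.
  exact: Hl.
Qed.
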